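(* Let $\gamma$ be a generator of the multiplicative group $\mathbb{F}_{q^m}^*$. Let $d\le q-1$ and let $\ell_1,\dots,\ell_d\in\{0,1,\dots,q-2\}$ be distinct. Then the $d\times d$ matrix $M$ over $\mathbb{F}_{q^m}$ whose $(i,j)$ entry, for $i=0,1,\dots,d-1$ and $j=1,\dots,d$, is $\gamma^{\ell_j(1+q+\cdots+q^{i-1})}$ (so the row $i=0$ is all ones, row $i=1$ is $(\gamma^{\ell_1},\dots,\gamma^{\ell_d})$, row $i=2$ is $(\gamma^{\ell_1(1+q)},\dots,\gamma^{\ell_d(1+q)})$, etc.) is full rank. *)

(* Defs.v *)
From mathcomp Require Import all_boot all_algebra all_field.
Set Implicit Arguments.
Unset Strict Implicit.
Unset Printing Implicit Defensive.

(* Main.v *)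
Require Import Defs.
From mathcomp Require Import ring.
From mathcomp Require Import all_boot all_algebra all_field.
From mathcomp Require Import zify.
Import GRing.Theory.
Local Open Scope ring_scope.


Lemma sumq (q a b : nat) : (\sum_(t < a + b) q ^ t = \sum_(t < a) q ^ t + q ^ a * \sum_(t < b) q ^ t)%N.
Proof.
elim: b => [|b IH]; first by rewrite addn0 big_ord0 muln0 addn0.
by rewrite addnS !big_ord_recr /= IH mulnDr -expnD addnA.
Qed.
Lemma frobD (R : comNzRingType) (p : nat) (hp : p \in [pchar R]) n (x y : R) :
  (x + y) ^+ (p ^ n) = x ^+ (p ^ n) + y ^+ (p ^ n).
Proof.
elim: n => [|n IH]; first by rewrite !expr1.
by rewrite expnSr !exprM IH -!(pFrobenius_autE hp) rmorphD.
Qed.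
Lemma frobN (R : comNzRingType) (p : nat) (hp : p \in [pchar R]) n (x : R) :
  (- x) ^+ (p ^ n) = - x ^+ (p ^ n).
Proof.
elim: n => [|n IH]; first by rewrite !expr1.
by rewrite expnSr !exprM IH -!(pFrobenius_autE hp) rmorphN.
Qed.
Lemma frob_sum (R : comNzRingType) (p : nat) (hp : p \in [pchar R]) n I (r : seq I) (P : pred I) (F : I -> R) :
  (\sum_(i <- r | P i) F i) ^+ (p ^ n) = \sum_(i <- r | P i) F i ^+ (p ^ n).
Proof.
apply: (big_morph (fun x => x ^+ (p ^ n))); first by move=> x y; apply: frobD.
have p0 := prime_gt0 (pcharf_prime hp). rewrite expr0n expn_eq0. case: p hp p0 => // .  
Qed.

Theorem corollary2p16 (F : finFieldType) (p k q m : nat)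
  (hp : prime p) (hk : (0 < k)%N) (hq : q = (p ^ k)%N) (hF : #|F| = (q ^ m)%N)
  (gamma : F) (hgamma : ((q ^ m).-1).-primitive_root gamma)
  (d : nat) (hd : (d <= q.-1)%N)
  (l : 'I_d -> nat) (hl_inj : injective l) (hl_range : forall j, (l j <= q - 2)%N) :
  \rank (\matrix_(i < d, j < d) gamma ^+ (l j * \sum_(t < i) q ^ t)%N) = d.
Proof.
set S := fun i => (\sum_(t < i) q ^ t)%N.
set A := \matrix_(i < d, j < d) _.
have q2 : (1 < q)%N by rewrite hq -(expn0 p) ltn_exp2l // prime_gt1.
have N0 := prim_order_gt0 hgamma.
have m0 : (0 < m)%N by rewrite lt0n; apply/eqP => m0; move: N0; rewrite m0 expn0.
have hN : (q ^ m).-1 = (q.-1 * S m)%N by rewrite predn_exp.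
have hqS : forall i, (q ^ i = (S i * q.-1).+1)%N.
  by move=> i; rewrite mulnC -predn_exp prednK // expn_gt0 ltnW.
have Sm0 : (0 < S m)%N.
  by rewrite /S -(prednK m0) big_ord_recl expn0.
have pchF : p \in [pchar F].
  by apply: (@card_finPcharP _ p (k * m)) => //; rewrite hF hq expnM.
have g0 : gamma != 0.
  apply/eqP => g0; have := prim_expr_order hgamma; rewrite g0 expr0n.
  by case: ((q ^ m).-1) N0 => // n _ /eqP; rewrite eq_sym oner_eq0.
have gN : gamma ^+ (q.-1 * S m) = 1 by rewrite -hN prim_expr_order.
have zq : forall (z : F) s, z ^+ ((q ^ m) ^ s) = z.
  move=> z; elim=> [|s IH]; first by rewrite expn0 expr1.
  by rewrite expnS mulnC exprM IH -hF expf_card.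
have zq1 : forall (z : F) s, z ^+ (q ^ s) = 1 -> z = 1.
  move=> z s h; rewrite -(zq z s) -expnM.
  have -> : (m * s = s + m.-1 * s)%N by rewrite -{1}(prednK m0) mulSn.
  by rewrite expnD exprM h expr1n.
have G : forall t, (0 < t < q.-1)%N -> gamma ^+ S t != 1.
  move=> t /andP[t0 tq]; apply/negP => /eqP Ht.
  have H1 : forall s, gamma ^+ S (s * t)%N = 1.
    elim=> [|s IH]; first by rewrite mul0n /S big_ord0.
    by rewrite mulSn /S sumq -/(S t) -/(S (s * t)%N) exprD mulnC exprM Ht IH !expr1n mulr1.
  have H2 : forall s, gamma ^+ S (m * s)%N = gamma ^+ (S m * s).
    elim=> [|s IH]; first by rewrite !muln0 /S big_ord0.
    rewrite mulnS /S sumq -/(S m) -/(S (m * s)%N) exprD.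
    by rewrite [(q ^ m * _)%N]mulnC exprM IH -hF expf_card -exprD mulnS.
  have := H1 m; rewrite H2 => /eqP; rewrite -(prim_order_dvd hgamma) hN.
  rewrite mulnC dvdn_pmul2l // => /dvdn_leq => /(_ t0); rewrite leqNgt tq.
  done.
have [K [phi _]] := countable_algebraic_closure F.
have pchK : p \in [pchar K] := rmorph_pchar phi pchF.
have [y hy] : exists y : K, y ^+ q.-1 = phi gamma.
  have : size ('X^(q.-1) - (phi gamma)%:P : {poly K}) != 1%N.
    by rewrite size_XnsubC ?prednK ?(ltnW q2) // ?gtn_eqF // -ltnS prednK // ltnW.
  case/closed_rootP => y; rewrite /root !hornerE subr_eq0 => /eqP hy.
  by exists y.
have y0 : y != 0.
  apply/eqP => y0; move: hy; rewrite y0 expr0n.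
  have -> : (q.-1 == 0%N) = false by apply/negbTE; rewrite -lt0n -subn1 subn_gt0.
  by move/esym/eqP; rewrite fmorph_eq0 (negbTE g0).
have frobq : forall i (x1 x2 : K), (x1 + x2) ^+ (q ^ i) = x1 ^+ (q ^ i) + x2 ^+ (q ^ i).
  by move=> i x1 x2; rewrite hq -expnM frobD.
have frobqs : forall i I (r : seq I) (P : pred I) (f : I -> K), (\sum_(j <- r | P j) f j) ^+ (q ^ i) = \sum_(j <- r | P j) f j ^+ (q ^ i).
  by move=> i I r P f; rewrite hq -expnM frob_sum.
have yq : forall i, y ^+ (q ^ i) = y * phi (gamma ^+ S i).
  by move=> i; rewrite hqS exprS mulnC exprM hy rmorphXn.
have yinj : forall s s', (s < s' < q.-1)%N -> y ^+ (q ^ s) != y ^+ (q ^ s').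
  move=> s s' /andP[ss' s'q]; rewrite !yq; apply/negP => /eqP /(mulfI y0) /fmorph_inj.
  rewrite -(subnKC (ltnW ss')) /S sumq -/(S s) -/(S (s' - s)%N) exprD.
  rewrite -{1}(mulr1 (gamma ^+ S s)) => /(mulfI (expf_neq0 _ g0)) /esym.
  rewrite mulnC exprM => /zq1 /eqP; apply/negP; apply: G.
  by rewrite subn_gt0 ss' /= (leq_ltn_trans (leq_subr _ _) s'q).
pose e := fun t : 'I_q => if (t == 0 :> nat) then 0 else gamma ^+ (S m * t.-1).
have e_inj : injective e.
  move=> a b; rewrite /e; case: eqP => [a0|/eqP a0]; case: eqP => [b0|/eqP b0].
  - by move=> _; apply: val_inj; rewrite /= a0 b0.
  - by move=> /esym/eqP; rewrite expf_eq0 (negbTE g0) andbF.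
  - by move=> /eqP; rewrite expf_eq0 (negbTE g0) andbF.
  move=> /eqP; rewrite (eq_prim_root_expr hgamma) hN !modn_small; last first.
  - by rewrite mulnC ltn_pmul2r // -subn1 -[X in (_ < X)%N]subn1 ltn_sub2r // ltn_ord.
  - by rewrite mulnC ltn_pmul2r // -subn1 -[X in (_ < X)%N]subn1 ltn_sub2r // ltn_ord.
  rewrite eqn_pmul2l // => /eqP h; apply: val_inj => /=.
  have a1 : (0 < a)%N by rewrite lt0n.
  have b1 : (0 < b)%N by rewrite lt0n.
  by rewrite -(prednK a1) -(prednK b1) h.
have eq_frob : forall t, e t ^+ q = e t.
  move=> t; rewrite /e; case: eqP => _; first by rewrite expr0n gtn_eqF // ltnW.
  have -> : forall x : F, x ^+ q = x * x ^+ q.-1 by move=> x; rewrite -exprS prednK // ltnW.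
  by rewrite -exprM mulnAC (mulnC (S m) q.-1) (exprM gamma (q.-1 * S m)) gN expr1n mulr1.
have del_frob : forall a b s, (e a - e b) ^+ (q ^ s) = e a - e b.
  move=> a b; elim=> [|s IH]; first by rewrite expr1.
  have fB : forall x1 x2 : F, (x1 - x2) ^+ q = x1 ^+ q - x2 ^+ q.
    by move=> x1 x2; rewrite hq frobD // frobN.
  by rewrite expnSr exprM IH fB !eq_frob.
pose f := fun a : {ffun 'I_d -> 'I_q} => \sum_j phi (e (a j)) * y ^+ l j.
have f_inj : injective f.
  move=> a b hab; apply/ffunP => j0; apply/eqP; apply/negP => /negP hj0.
  pose del := fun j => e (a j) - e (b j).
  have hdel : \sum_j phi (del j) * y ^+ l j = 0.
    rewrite /del; under eq_bigr do rewrite rmorphB mulrBl.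
    by rewrite sumrB -/(f a) hab subrr.
  pose g : {poly K} := \sum_j phi (del j) *: 'X^(l j).
  have dj0 : del j0 != 0 by rewrite /del subr_eq0; apply: contra hj0 => /eqP /e_inj ->.
  have g0' : g != 0.
    apply/eqP => /(congr1 (fun r : {poly K} => r`_(l j0))).
    rewrite coef0 coef_sum (bigD1 j0) //= coefZ coefXn eqxx mulr1 big1 ?addr0.
      by apply/eqP; rewrite fmorph_eq0.
    move=> j jj0; rewrite coefZ coefXn.
    rewrite (_ : (l j0 == l j) = false) ?mulr0 //.
    by apply/negbTE; apply: contra jj0 => /eqP /hl_inj ->.
  have szg : (size g <= q.-1)%N.
    apply: (leq_trans (size_sum _ _ _)); apply/bigmax_leqP => j _.
    apply: (leq_trans (size_scale_leq _ _)); rewrite size_polyXn.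
    move: (hl_range j) q2; clear; lia.
  pose rs := [seq y ^+ (q ^ s) | s <- iota 0 q.-1].
  have := max_poly_roots (rs := rs) g0'.
  have -> : all (root g) rs.
    apply/allP => _ /mapP[s _ ->]; rewrite /root horner_sum.
    under eq_bigr do rewrite hornerZ hornerXn -exprM mulnC exprM.
    have <- : \sum_j (phi (del j) * y ^+ l j) ^+ (q ^ s) = \sum_j phi (del j) * (y ^+ l j) ^+ (q ^ s).
      by apply: eq_bigr => j _; rewrite exprMn -rmorphXn /del del_frob.
    by rewrite -frobqs hdel expr0n expn_eq0 (negbTE (lt0n_neq0 (ltnW q2))).
  have -> : uniq rs.
    rewrite map_inj_in_uniq ?iota_uniq // => s s'; rewrite !mem_iota /= !add0n => hs hs' hss'.
    case: (ltngtP s s') => // h.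
      by move: (yinj s s'); rewrite h hs' hss' eqxx; move/(_ isT).
    by move: (yinj s' s); rewrite h hs hss' eqxx; move/(_ isT).
  by rewrite size_map size_iota ltnNge szg; move/(_ isT isT).
apply/eqP; rewrite eqn_leq rank_leq_row /= leqNgt; apply/negP => hlt.
have kA0 : kermx A != 0 by rewrite -mxrank_eq0 mxrank_ker -lt0n subn_gt0.
have [i0 hi0] : exists i0, row i0 (kermx A) != 0.
  apply/existsP; apply: contraNT kA0 => /existsPn H; apply/eqP/row_matrixP => i.
  by rewrite row0; apply/eqP; move: (H i); rewrite negbK.
set c := row i0 (kermx A) in hi0.
have cA : forall j, \sum_i c 0 i * gamma ^+ (l j * S i) = 0.
  move=> j; have : (c *m A) 0 j = 0 by rewrite /c -row_mul mulmx_ker row0 mxE.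
  rewrite mxE => H; rewrite -[RHS]H; by apply: eq_bigr => i _; rewrite /A !mxE.
have [i1 hi1] : exists i1, c 0 i1 != 0.
  apply/existsP; apply: contraNT hi0 => /existsPn H0; apply/eqP/rowP => i.
  by have := H0 i; rewrite negbK => /eqP; rewrite /c !mxE.
pose P : {poly K} := \sum_(i < d) phi (c 0 i) *: 'X^(q ^ i).
have P0 : P != 0.
  apply/eqP => /(congr1 (fun r : {poly K} => r`_(q ^ i1))).
  rewrite coef0 coef_sum (bigD1 i1) //= coefZ coefXn eqxx mulr1 big1 ?addr0.
    by apply/eqP; rewrite fmorph_eq0.
  move=> i ii1; rewrite coefZ coefXn.
  rewrite (_ : (q ^ i1 == q ^ i)%N = false) ?mulr0 //.
  by apply/negbTE; apply: contra ii1 => /eqP /(expnI q2) /val_inj ->.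
have szP : (size P <= (q ^ d.-1).+1)%N.
  apply: (leq_trans (size_sum _ _ _)); apply/bigmax_leqP => i _.
  apply: (leq_trans (size_scale_leq _ _)); rewrite size_polyXn ltnS leq_pexp2l ?(ltnW q2) //.
  by rewrite -ltnS prednK ?ltn_ord // (leq_ltn_trans _ (ltn_ord i)).
pose rs := [seq f a | a <- enum {ffun 'I_d -> 'I_q}].
have := max_poly_roots (rs := rs) P0.
have -> : all (root P) rs.
  apply/allP => _ /mapP[a _ ->]; rewrite /root horner_sum.
  have ef : forall t s, e t ^+ (q ^ s) = e t.
    move=> t; elim=> [|s IH]; first by rewrite expr1.
    by rewrite expnSr exprM IH eq_frob.
  have fq : forall i, f a ^+ (q ^ i) =
      \sum_j phi (e (a j)) * y ^+ l j * phi (gamma ^+ (l j * S i)).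
    move=> i; rewrite /f frobqs; apply: (eq_bigr (fun j => _)) => j _.
    rewrite exprMn -rmorphXn ef exprAC yq exprMn -rmorphXn -exprM mulnC mulrA //.
  under eq_bigr do rewrite hornerZ hornerXn fq mulr_sumr.
  rewrite exchange_big /=; apply/eqP; apply: big1 => j _.
  rewrite (eq_bigr (fun i => phi (e (a j)) * y ^+ l j * phi (c 0 i * gamma ^+ (l j * S i)))); last first.
    by move=> i _; rewrite rmorphM; ring.
  by rewrite -mulr_sumr -rmorph_sum cA rmorph0 mulr0.
have -> : uniq rs by rewrite map_inj_uniq ?enum_uniq.
rewrite size_map -cardE card_ffun !card_ord ltnNge => /(_ isT isT) /negP; apply.
have d0 : (0 < d)%N by apply: leq_ltn_trans (ltn_ord i1).
apply: (leq_trans szP); move: d0 q2; clear; case: d => [//|d' _] /=.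
by move=> q1; rewrite ltn_exp2l.
Qed.
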